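(* A set $\Gamma\subset\mathbb{C}$ is of the form $f(\mathbb{R})$ for some nonconstant delta-monotone map $f\colon\mathbb{C}\to\mathbb{C}$ if and only if $\Gamma$ is a Lipschitz graph, i.e. $\Gamma=\{x+ig(x)\colon x\in\mathbb{R}\}$ for some Lipschitz function $g\colon\mathbb{R}\to\mathbb{R}$ (equivalently, the projection $w\mapsto\operatorname{Re}w$ is a bi-Lipschitz map of $\Gamma$ onto $\mathbb{R}$).
   Context: A map $f\colon\mathbb{C}\to\mathbb{C}$ is delta-monotone if there exists $\delta>0$ such that $\operatorname{Re}\frac{f(z)-f(\zeta)}{z-\zeta}\ge\delta\frac{|f(z)-f(\zeta)|}{|z-\zeta|}$ for all distinct $z,\zeta\in\mathbb{C}$. *)

(* Defs.v *)
From Stdlib Require Import Reals.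
Open Scope R_scope.

Definition Cplx : Type := (R * R)%type.

Definition Re (z : Cplx) : R := fst z.
Definition Im (z : Cplx) : R := snd z.
Definition RtoC (x : R) : Cplx := (x, 0).
Definition Csub (z w : Cplx) : Cplx := (fst z - fst w, snd z - snd w).
Definition Cmul (z w : Cplx) : Cplx :=
  (fst z * fst w - snd z * snd w, fst z * snd w + snd z * fst w).
Definition Cinv (z : Cplx) : Cplx :=
  (fst z / (fst z ^ 2 + snd z ^ 2), - snd z / (fst z ^ 2 + snd z ^ 2)).
Definition Cdiv (z w : Cplx) : Cplx := Cmul z (Cinv w).
Definition Cmod (z : Cplx) : R := sqrt (fst z ^ 2 + snd z ^ 2).

Definition delta_monotone (f : Cplx -> Cplx) : Prop :=
  exists delta : R, 0 < delta /\
    forall z zeta : Cplx, z <> zeta ->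
      Re (Cdiv (Csub (f z) (f zeta)) (Csub z zeta))
        >= delta * (Cmod (Csub (f z) (f zeta)) / Cmod (Csub z zeta)).

Definition nonconstant (f : Cplx -> Cplx) : Prop := exists z w : Cplx, f z <> f w.

Definition lipschitz (g : R -> R) : Prop :=
  exists L : R, forall x y : R, Rabs (g x - g y) <= L * Rabs (x - y).

(* Main.v *)
Require Import Defs.
From Stdlib Require Import Reals Lra Psatz Classical ClassicalEpsilon.
Open Scope R_scope.

Definition dot (a b : Cplx) : R := fst a * fst b + snd a * snd b.
Definition addc (a b : Cplx) : Cplx := (fst a + fst b, snd a + snd b).

Lemma Cmod_ge0 a : 0 <= Cmod a.
Proof. unfold Cmod; apply sqrt_pos. Qed.

Lemma Cmod_sq a : Cmod a * Cmod a = fst a ^ 2 + snd a ^ 2.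
Proof. unfold Cmod; apply sqrt_sqrt; nra. Qed.

Lemma Cmod_le_sq a c : 0 <= c -> fst a ^ 2 + snd a ^ 2 <= c * c -> Cmod a <= c.
Proof. intros Hc H. unfold Cmod. rewrite <- (sqrt_square c Hc). apply sqrt_le_1_alt; lra. Qed.

Lemma CS a b : dot a b <= Cmod a * Cmod b.
Proof.
  unfold dot, Cmod. destruct a as [a1 a2], b as [b1 b2]; cbn [fst snd].
  replace (a1 ^ 2 + a2 ^ 2) with (Rsqr a1 + Rsqr a2) by (unfold Rsqr; ring).
  replace (b1 ^ 2 + b2 ^ 2) with (Rsqr b1 + Rsqr b2) by (unfold Rsqr; ring).
  apply sqrt_cauchy.
Qed.

Lemma Cmod_fst a : Rabs (fst a) <= Cmod a.
Proof.
  pose proof (Cmod_sq a). pose proof (Cmod_ge0 a).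
  apply Rabs_le. split; nra.
Qed.

Lemma Cmod_snd a : Rabs (snd a) <= Cmod a.
Proof.
  pose proof (Cmod_sq a). pose proof (Cmod_ge0 a).
  apply Rabs_le. split; nra.
Qed.

Lemma Cmod_zero a b : Cmod (Csub a b) <= 0 -> a = b.
Proof.
  intro H. pose proof (Cmod_sq (Csub a b)). pose proof (Cmod_ge0 (Csub a b)).
  destruct a as [a1 a2], b as [b1 b2]; unfold Csub in *; cbn [fst snd] in *.
  assert (E: (a1 - b1)^2 + (a2 - b2)^2 = 0) by nra.
  pose proof (pow2_ge_0 (a1 - b1)); pose proof (pow2_ge_0 (a2 - b2)).
  assert (E1: (a1 - b1)^2 = 0) by lra. assert (E2: (a2 - b2)^2 = 0) by lra.
  assert (a1 - b1 = 0) by nra. assert (a2 - b2 = 0) by nra.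
  f_equal; lra.
Qed.

Lemma sub_pt a b : a <> b -> 0 < fst (Csub a b) ^ 2 + snd (Csub a b) ^ 2.
Proof.
  intro H. destruct a as [a1 a2], b as [b1 b2]; unfold Csub; cbn [fst snd].
  pose proof (pow2_ge_0 (a1 - b1)); pose proof (pow2_ge_0 (a2 - b2)).
  destruct (Req_dec a1 b1).
  - destruct (Req_dec a2 b2).
    + subst; congruence.
    + assert (0 < (a2 - b2)^2) by nra; lra.
  - assert (0 < (a1 - b1)^2) by nra; lra.
Qed.

Definition cone (f : Cplx -> Cplx) (d : R) : Prop :=
  forall z w : Cplx, z <> w ->
    dot (Csub (f z) (f w)) (Csub z w) >= d * Cmod (Csub (f z) (f w)) * Cmod (Csub z w).

Lemma dm_cone f d :
  (forall z w : Cplx, z <> w ->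
      Re (Cdiv (Csub (f z) (f w)) (Csub z w))
        >= d * (Cmod (Csub (f z) (f w)) / Cmod (Csub z w))) -> cone f d.
Proof.
  intros H z w Hzw. specialize (H z w Hzw).
  pose proof (sub_pt _ _ Hzw) as Hn.
  set (D := Csub z w) in *. set (W := Csub (f z) (f w)) in *.
  assert (Hs: Cmod D * Cmod D = fst D ^ 2 + snd D ^ 2) by apply Cmod_sq.
  assert (Hpos: 0 < Cmod D) by (pose proof (Cmod_ge0 D); nra).
  unfold Re, Cdiv, Cmul, Cinv in H; cbn [fst snd] in H. unfold dot.
  rewrite <- Hs in H.
  set (s := Cmod D) in *.
  assert (E1: fst W * (fst D / (s * s)) - snd W * (- snd D / (s * s)) =
              (fst W * fst D + snd W * snd D) / (s * s)) by (field; lra).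
  assert (E2: d * (Cmod W / s) = (d * Cmod W * s) / (s * s)) by (field; lra).
  rewrite E1, E2 in H.
  apply Rle_ge. apply Rge_le in H.
  assert (0 < s * s) by nra.
  apply (Rmult_le_compat_r (s * s)) in H; [|lra].
  unfold Rdiv in H. rewrite !Rmult_assoc, Rinv_l in H by lra. lra.
Qed.

Lemma Cmod_opp a : Cmod (- fst a, - snd a) = Cmod a.
Proof. unfold Cmod; cbn [fst snd]; f_equal; ring. Qed.

Lemma halfcone d a p m : 0 < d -> Cmod m = 1 -> 0 < Cmod p ->
  dot a p >= d * Cmod a * Cmod p -> dot p m >= (1 - d*d/8) * Cmod p ->
  dot a m >= d/2 * Cmod a.
Proof.
  intros Hd Hm Hp Hap Hpm.
  set (P := Cmod p) in *.
  set (w := (P * fst m - fst p, P * snd m - snd p)).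
  assert (Hm2 : fst m ^ 2 + snd m ^ 2 = 1) by (rewrite <- Cmod_sq, Hm; ring).
  assert (Hp2 : fst p ^ 2 + snd p ^ 2 = P * P) by (unfold P; rewrite Cmod_sq; ring).
  assert (Hw : Cmod w <= d / 2 * P).
  { apply Cmod_le_sq. nra. unfold w; cbn [fst snd]. unfold dot in Hpm.
    nra. }
  assert (Hcs := CS (- fst a, - snd a) w). rewrite Cmod_opp in Hcs.
  assert (Ha0 := Cmod_ge0 a).
  assert (E : P * dot a m = dot a p - dot (- fst a, - snd a) w).
  { unfold dot, w; cbn [fst snd]. ring. }
  assert (P * dot a m >= P * (d / 2 * Cmod a)).
  { rewrite E. assert (Cmod a * Cmod w <= Cmod a * (d/2*P)) by (apply Rmult_le_compat_l; lra). nra. }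
  apply Rle_ge. apply Rge_le in H. apply (Rmult_le_reg_l P); lra.
Qed.

Lemma Csub_add z p : Csub (addc z p) z = p.
Proof. destruct z, p; unfold Csub, addc; cbn [fst snd]; f_equal; ring. Qed.

Lemma Csub_add2 z p q : Csub (addc z q) (addc z p) = Csub q p.
Proof. destruct z, p, q; unfold Csub, addc; cbn [fst snd]; f_equal; ring. Qed.

Lemma neq_of_Cmod a b : 0 < Cmod (Csub a b) -> a <> b.
Proof. intros H E; subst. unfold Csub, Cmod in H. cbn [fst snd] in H.
  replace ((fst b - fst b) ^ 2 + (snd b - snd b) ^ 2) with 0 in H by ring.
  rewrite sqrt_0 in H; lra. Qed.

Lemma step f d z p q m : 0 < d -> cone f d -> Cmod m = 1 -> 0 < Cmod p -> 0 < Cmod (Csub q p) ->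
  dot p m >= (1 - d*d/8) * Cmod p ->
  dot (Csub q p) m >= (1 - d*d/8) * Cmod (Csub q p) ->
  Cmod (Csub (f (addc z q)) (f z)) >= d/2 * Cmod (Csub (f (addc z p)) (f z)).
Proof.
  intros Hd Hc Hm Hp Hqp H1 H2.
  set (a := Csub (f (addc z p)) (f z)).
  set (b := Csub (f (addc z q)) (f (addc z p))).
  assert (Ha : dot a p >= d * Cmod a * Cmod p).
  { pose proof (Hc (addc z p) z) as C. rewrite Csub_add in C. apply C.
    apply neq_of_Cmod. rewrite Csub_add. exact Hp. }
  assert (Hb : dot b (Csub q p) >= d * Cmod b * Cmod (Csub q p)).
  { pose proof (Hc (addc z q) (addc z p)) as C. rewrite Csub_add2 in C. apply C.
    apply neq_of_Cmod. rewrite Csub_add2. exact Hqp. }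
  pose proof (halfcone d a p m Hd Hm Hp Ha H1) as Ha'.
  pose proof (halfcone d b (Csub q p) m Hd Hm Hqp Hb H2) as Hb'.
  assert (E : Csub (f (addc z q)) (f z) = (fst a + fst b, snd a + snd b)).
  { unfold a, b, Csub; cbn [fst snd]. f_equal; ring. }
  rewrite E. pose proof (CS (fst a + fst b, snd a + snd b) m) as C. rewrite Hm in C.
  unfold dot in C, Ha', Hb'; cbn [fst snd] in C.
  pose proof (Cmod_ge0 b). fold a. nra.
Qed.

Lemma sin_le_x x : 0 <= x -> 0 <= sin x <= x \/ 1 <= x.
Proof.
  intro H. destruct (Rle_lt_dec 1 x). right; lra. left.
  assert (PI2_1 := PI2_1). split.
  - apply sin_ge_0; lra.
  - destruct (Req_dec x 0). subst; rewrite sin_0; lra.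
    left; apply sin_lt_x; lra.
Qed.

Lemma cos_step d h : 0 < d <= 1 -> 0 < h -> h <= d/2 -> cos h >= 1 - d*d/8.
Proof.
  intros Hd Hh Hhd.
  replace h with (2 * (h/2)) by field. rewrite cos_2a_sin.
  destruct (sin_le_x (h/2)) as [[A B]|A]; [lra| |lra].
  nra.
Qed.

Lemma Cmod_unit s t : 0 <= s -> Cmod (s * cos t, s * sin t) = s.
Proof.
  intro Hs. unfold Cmod; cbn [fst snd].
  replace ((s * cos t) ^ 2 + (s * sin t) ^ 2) with (s * s * (Rsqr (sin t) + Rsqr (cos t))) by (unfold Rsqr; ring).
  rewrite sin2_cos2, Rmult_1_r. apply sqrt_square; lra.
Qed.

Lemma kmod_le k y D : 0 < k -> 0 <= y -> k*k*(fst D ^ 2 + snd D ^ 2) <= y*y -> k * Cmod D <= y.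
Proof.
  intros Hk Hy H. pose proof (Cmod_sq D). pose proof (Cmod_ge0 D).
  destruct (Rle_lt_dec (k * Cmod D) y); auto.
  assert (y * y < (k * Cmod D) * (k * Cmod D)) by nra. nra.
Qed.

Lemma core_ineq d N0 C : 0 < d <= 1 -> N0 = 1 + 3/d -> 1 - d*d/8 <= C <= 1 ->
  (1 - d*d/8) * (1 - d*d/8) * (N0*N0 - 2*N0*C + 1) <= (N0 - C) * (N0 - C).
Proof.
  intros Hd HN HC. set (e := d*d/8) in *. set (t := N0 - C).
  assert (Ht : t * d >= 3) by (unfold t; rewrite HN; field_simplify; nra).
  assert (Ht2 : t * t * e >= 9/8) by (unfold e; nra).
  assert (He : 0 < e <= 1/8) by (unfold e; nra).
  replace (N0*N0 - 2*N0*C + 1) with (t*t + (1 - C*C)) by (unfold t; ring).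
  assert (0 <= 1 - C * C <= 1) by nra.
  nra.
Qed.

Lemma chain f d z r a h N0 : 0 < d <= 1 -> cone f d -> 0 < r -> 0 < h -> h <= d/2 -> N0 = 1 + 3/d ->
  forall k : nat,
  Cmod (Csub (f (addc z (r * N0 ^ k * cos (a + INR k * h), r * N0 ^ k * sin (a + INR k * h)))) (f z))
  >= (d/2) ^ k * Cmod (Csub (f (addc z (r * cos a, r * sin a))) (f z)).
Proof.
  intros Hd Hc Hr Hh Hhd HN.
  assert (HN1 : N0 >= 1 + 3) by (rewrite HN; assert (3/d >= 3) by (apply Rle_ge; apply (Rmult_le_reg_r d); [lra| field_simplify; lra]); lra).
  induction k.
  - simpl. replace (a + 0 * h) with a by ring. rewrite !Rmult_1_r. lra.
  - set (t := a + INR k * h) in *.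
    set (s := r * N0 ^ k) in *.
    assert (Hs : 0 < s) by (unfold s; apply Rmult_lt_0_compat; [lra| apply pow_lt; lra]).
    replace (a + INR (S k) * h) with (t + h) by (unfold t; rewrite S_INR; ring).
    replace (r * N0 ^ S k) with (s * N0) by (unfold s; simpl; ring).
    set (p := (s * cos t, s * sin t)).
    set (q := (s * N0 * cos (t + h), s * N0 * sin (t + h))).
    set (m := (1 * cos (t + h), 1 * sin (t + h))).
    assert (Hm : Cmod m = 1) by (apply Cmod_unit; lra).
    assert (Hp : Cmod p = s) by (apply Cmod_unit; lra).
    assert (HC := cos_step d h Hd Hh Hhd).
    assert (HC1 := COS_bound h).
    assert (Hcm : cos (t + h - t) = cos (t + h) * cos t + sin (t + h) * sin t) by apply cos_minus.
    replace (t + h - t) with h in Hcm by ring.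
    assert (S1 := sin2_cos2 t). assert (S2 := sin2_cos2 (t + h)). unfold Rsqr in S1, S2.
    assert (Hd1 : dot p m = s * cos h) by (unfold dot, p, m; cbn [fst snd]; rewrite Hcm; ring).
    assert (Hd2 : dot (Csub q p) m = s * (N0 - cos h)).
    { unfold dot, Csub, p, q, m; cbn [fst snd]. rewrite Hcm.
      transitivity (s * N0 * (sin (t + h) * sin (t + h) + cos (t + h) * cos (t + h))
          - s * (cos (t + h) * cos t + sin (t + h) * sin t)); [ring|].
      rewrite S2. ring. }
    assert (Hqp2 : fst (Csub q p) ^ 2 + snd (Csub q p) ^ 2 = s * s * (N0*N0 - 2*N0*cos h + 1)).
    { unfold Csub, p, q; cbn [fst snd]. rewrite Hcm.
      transitivity (s*s*(N0*N0*(sin (t + h) * sin (t + h) + cos (t + h) * cos (t + h))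
          - 2*N0*(cos (t + h) * cos t + sin (t + h) * sin t) + (sin t * sin t + cos t * cos t))); [ring|].
      rewrite S1, S2. ring. }
    assert (Hqp : 0 < Cmod (Csub q p)).
    { pose proof (CS (Csub q p) m) as C. rewrite Hm, Hd2 in C.
      assert (0 < s * (N0 - cos h)) by (apply Rmult_lt_0_compat; lra). lra. }
    pose proof (step f d z p q m ltac:(lra) Hc Hm ltac:(lra) Hqp) as St.
    assert (St' : Cmod (Csub (f (addc z q)) (f z)) >= d / 2 * Cmod (Csub (f (addc z p)) (f z))).
    { apply St.
      - rewrite Hd1, Hp. nra.
      - rewrite Hd2. apply Rle_ge.
        apply kmod_le. nra. apply Rmult_le_pos; lra.
        rewrite Hqp2.
        pose proof (core_ineq d N0 (cos h) Hd HN ltac:(lra)).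
        replace ((1 - d * d / 8) * (1 - d * d / 8) * (s * s * (N0 * N0 - 2 * N0 * cos h + 1)))
          with ((s*s) * ((1 - d * d / 8) * (1 - d * d / 8) * (N0 * N0 - 2 * N0 * cos h + 1))) by ring.
        replace (s * (N0 - cos h) * (s * (N0 - cos h))) with ((s*s) * ((N0 - cos h) * (N0 - cos h))) by ring.
        apply Rmult_le_compat_l; nra. }
    unfold q in St'. unfold p in St'.
    replace (s * N0 * cos (t + h)) with (s * N0 * cos (t+h)) by ring.
    change ((d/2) ^ S k) with (d/2 * (d/2)^k).
    pose proof (Cmod_ge0 (Csub (f (addc z (r * cos a, r * sin a))) (f z))).
    assert (0 < d/2) by lra.
    apply Rle_ge. eapply Rle_trans; [|apply Rge_le; exact St'].
    rewrite Rmult_assoc. apply Rmult_le_compat_l; [lra|]. apply Rge_le; exact IHk.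
Qed.

Lemma chaincor f d z r a sg n N0 : 0 < d <= 1 -> cone f d -> 0 < r -> 0 < sg <= 2 * PI ->
  INR n > 4 * PI / d -> N0 = 1 + 3 / d ->
  Cmod (Csub (f (addc z (r * N0 ^ n * cos (a + sg), r * N0 ^ n * sin (a + sg)))) (f z))
  >= (d/2) ^ n * Cmod (Csub (f (addc z (r * cos a, r * sin a))) (f z)).
Proof.
  intros Hd Hc Hr Hs Hn HN.
  assert (Hpi := PI_RGT_0).
  assert (Hn0 : 0 < INR n) by (assert (0 < 4 * PI / d) by (apply Rdiv_lt_0_compat; lra); lra).
  assert (0 < sg / INR n /\ sg / INR n <= d / 2) as [H1 H2]; [split|].
  - apply Rdiv_lt_0_compat; lra.
  - apply (Rmult_le_reg_r (INR n)); [lra|].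
    replace (sg / INR n * INR n) with sg by (field; lra).
    assert (d * INR n > 4 * PI).
    { apply (Rmult_lt_compat_l d) in Hn; [|lra].
      replace (d * (4 * PI / d)) with (4 * PI) in Hn by (field; lra). lra. }
    lra.
  - pose proof (chain f d z r a (sg / INR n) N0 Hd Hc Hr H1 H2 HN n) as C.
    replace (a + INR n * (sg / INR n)) with (a + sg) in C by (field; lra).
    exact C.
Qed.

Definition geomP (f : Cplx -> Cplx) (M k : R) : Prop :=
  1 <= M /\ 0 < k /\
  (forall x r, 0 < r -> Cmod (Csub (f (x - r * M, 0)) (f (x, 0))) >= k * Cmod (Csub (f (x + r, 0)) (f (x, 0)))) /\
  (forall x r, 0 < r -> Cmod (Csub (f (x + r * M, 0)) (f (x, 0))) >= k * Cmod (Csub (f (x - r, 0)) (f (x, 0)))) /\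
  (forall a b, b <> 0 -> exists R, Cmod (Csub (f (R, 0)) (f (a, 0))) >= k * Cmod (Csub (f (a, b)) (f (a, 0)))).

Lemma geom f d : 0 < d <= 1 -> cone f d -> exists M k, geomP f M k.
Proof.
  intros Hd Hc.
  assert (Hpi := PI_RGT_0).
  destruct (INR_unbounded (4 * PI / d)) as [n Hn].
  set (N0 := 1 + 3 / d).
  assert (HN0 : 1 <= N0) by (unfold N0; assert (0 < 3 / d) by (apply Rdiv_lt_0_compat; lra); lra).
  exists (N0 ^ n), ((d/2)^n). split; [|split; [|split; [|split]]].
  - apply pow_R1_Rle; lra.
  - apply pow_lt; lra.
  - intros x r Hr.
    pose proof (chaincor f d (x, 0) r 0 PI n N0 Hd Hc Hr ltac:(lra) Hn eq_refl) as C.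
    rewrite Rplus_0_l, cos_PI, sin_PI, cos_0, sin_0 in C.
    unfold addc in C; cbn [fst snd] in C.
    replace (x + r * N0 ^ n * -1) with (x - r * N0 ^ n) in C by ring.
    replace (0 + r * N0 ^ n * 0) with 0 in C by ring.
    replace (x + r * 1) with (x + r) in C by ring.
    replace (0 + r * 0) with 0 in C by ring. exact C.
  - intros x r Hr.
    pose proof (chaincor f d (x, 0) r PI PI n N0 Hd Hc Hr ltac:(lra) Hn eq_refl) as C.
    replace (PI + PI) with (2 * PI) in C by ring.
    rewrite cos_2PI, sin_2PI, cos_PI, sin_PI in C.
    unfold addc in C; cbn [fst snd] in C.
    replace (x + r * N0 ^ n * 1) with (x + r * N0 ^ n) in C by ring.
    replace (0 + r * N0 ^ n * 0) with 0 in C by ring.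
    replace (x + r * -1) with (x - r) in C by ring.
    replace (0 + r * 0) with 0 in C by ring. exact C.
  - intros a b Hb. destruct (Rlt_or_le 0 b) as [Hb0|Hb0].
    + pose proof (chaincor f d (a, 0) b (PI/2) (3 * (PI/2)) n N0 Hd Hc Hb0 ltac:(lra) Hn eq_refl) as C.
      replace (PI/2 + 3 * (PI/2)) with (2 * PI) in C by field.
      rewrite cos_2PI, sin_2PI, cos_PI2, sin_PI2 in C.
      unfold addc in C; cbn [fst snd] in C.
      exists (a + b * N0 ^ n * 1).
      replace (0 + b * N0 ^ n * 0) with 0 in C by ring.
      replace (a + b * 0) with a in C by ring.
      replace (0 + b * 1) with b in C by ring. exact C.
    + assert (Hb1 : 0 < - b) by (destruct Hb0; [lra| congruence]).
      pose proof (chaincor f d (a, 0) (-b) (3 * (PI/2)) (PI/2) n N0 Hd Hc Hb1 ltac:(lra) Hn eq_refl) as C.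
      replace (3 * (PI/2) + PI/2) with (2 * PI) in C by field.
      rewrite cos_2PI, sin_2PI, cos_3PI2, sin_3PI2 in C.
      unfold addc in C; cbn [fst snd] in C.
      exists (a + - b * N0 ^ n * 1).
      replace (0 + - b * N0 ^ n * 0) with 0 in C by ring.
      replace (a + - b * 0) with a in C by ring.
      replace (0 + - b * -1) with b in C by ring. exact C.
Qed.

Definition uu (f : Cplx -> Cplx) (x : R) : R := fst (f (x, 0)).

Lemma R1m f d x y : cone f d -> x < y -> uu f y - uu f x >= d * Cmod (Csub (f (y, 0)) (f (x, 0))).
Proof.
  intros Hc Hxy.
  assert (Hne : (y, 0) <> (x, 0)) by (intro E; inversion E; lra).
  pose proof (Hc _ _ Hne) as C.
  assert (E : Cmod (Csub (y, 0) (x, 0)) = y - x).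
  { unfold Cmod, Csub; cbn [fst snd]. replace ((y - x) ^ 2 + (0 - 0) ^ 2) with ((y-x)*(y-x)) by ring.
    apply sqrt_square; lra. }
  rewrite E in C. unfold dot, Csub in C; cbn [fst snd] in C. unfold uu.
  replace ((0 - 0)) with 0 in C by ring. idtac.
  apply Rle_ge. apply Rge_le in C.
  apply (Rmult_le_reg_r (y - x)); [lra|]. rewrite Rmult_0_r, Rplus_0_r in C. exact C.
Qed.

Lemma Cmod_sym a b : Cmod (Csub a b) = Cmod (Csub b a).
Proof. unfold Cmod, Csub; cbn [fst snd]; f_equal; ring. Qed.

Lemma ufst f x y : Rabs (uu f x - uu f y) <= Cmod (Csub (f (x, 0)) (f (y, 0))).
Proof. apply (Cmod_fst (Csub (f (x,0)) (f (y,0)))). Qed.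

Lemma mono f d x y : 0 < d -> cone f d -> x <= y -> uu f x <= uu f y.
Proof.
  intros Hd Hc H. destruct H as [H|H]; [|subst; lra].
  pose proof (R1m f d x y Hc H). pose proof (Cmod_ge0 (Csub (f (y, 0)) (f (x, 0)))). nra.
Qed.

Lemma Rdiff f d x y : 0 < d -> cone f d -> d * Cmod (Csub (f (x, 0)) (f (y, 0))) <= Rabs (uu f x - uu f y).
Proof.
  intros Hd Hc. destruct (Rtotal_order x y) as [H|[H|H]].
  - pose proof (R1m f d x y Hc H). rewrite Cmod_sym. rewrite Rabs_minus_sym.
    pose proof (Rle_abs (uu f y - uu f x)). lra.
  - subst. unfold Csub, Cmod; cbn [fst snd]. rewrite !Rminus_diag.
    replace (0 ^ 2 + 0 ^ 2) with 0 by ring. rewrite sqrt_0, Rmult_0_r. apply Rabs_pos.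
  - pose proof (R1m f d y x Hc H). pose proof (Rle_abs (uu f x - uu f y)). lra.
Qed.

Lemma same_u f d x y : 0 < d -> cone f d -> uu f x = uu f y -> f (x, 0) = f (y, 0).
Proof.
  intros Hd Hc E. pose proof (Rdiff f d x y Hd Hc). rewrite E, Rminus_diag, Rabs_R0 in H.
  apply Cmod_zero. pose proof (Cmod_ge0 (Csub (f (x, 0)) (f (y, 0)))). nra.
Qed.


Lemma allreal_const f M k : geomP f M k -> nonconstant f -> ~ (forall x, f (x, 0) = f (0, 0)).
Proof.
  intros [HM [Hk [HA [HB HC]]]] [z [w Hzw]] Hall. apply Hzw.
  assert (Hg : forall p, f p = f (0,0)).
  { intros [a b]. destruct (Req_dec b 0) as [->|Hb]; [apply Hall|].
    destruct (HC a b Hb) as [R HR]. rewrite Hall, (Hall a) in HR.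
    assert (Cmod (Csub (f (0,0)) (f (0,0))) = 0).
    { unfold Cmod, Csub; cbn [fst snd]. rewrite !Rminus_diag. replace (0 ^ 2 + 0 ^ 2) with 0 by ring. apply sqrt_0. }
    rewrite H in HR. rewrite <- (Hall a). apply Cmod_zero.
    pose proof (Cmod_ge0 (Csub (f (a, b)) (f (0, 0)))). rewrite (Hall a) in *. nra. }
  rewrite (Hg z), (Hg w). reflexivity.
Qed.

Lemma Cmod_self a : Cmod (Csub a a) = 0.
Proof. unfold Cmod, Csub; cbn [fst snd]. rewrite !Rminus_diag. replace (0 ^ 2 + 0 ^ 2) with 0 by ring. apply sqrt_0. Qed.

Lemma pos1 f d M k : 0 < d -> cone f d -> geomP f M k -> nonconstant f -> exists t, 0 < t /\ uu f 0 < uu f t.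
Proof.
  intros Hd Hc HG Hnc. pose proof HG as [HM [Hk [HA [HB HC]]]].
  apply NNPP; intro Hn.
  assert (Hp : forall t, 0 < t -> f (t, 0) = f (0,0)).
  { intros t Ht. apply (same_u f d); auto.
    pose proof (mono f d 0 t Hd Hc ltac:(lra)).
    destruct (Rle_lt_dec (uu f t) (uu f 0)). lra. exfalso; apply Hn; exists t; auto. }
  apply (allreal_const f M k HG Hnc). intro x.
  destruct (Rtotal_order x 0) as [H|[H|H]]; [| subst; reflexivity | apply Hp; lra].
  pose proof (HB 0 (-x) ltac:(lra)) as B.
  rewrite (Hp (0 + - x * M)) in B by nra. rewrite Cmod_self in B.
  replace (0 - - x) with x in B by ring.
  apply Cmod_zero. pose proof (Cmod_ge0 (Csub (f (x, 0)) (f (0, 0)))). nra.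
Qed.

Lemma neg1 f d M k : 0 < d -> cone f d -> geomP f M k -> nonconstant f -> exists t, 0 < t /\ uu f (-t) < uu f 0.
Proof.
  intros Hd Hc HG Hnc. pose proof HG as [HM [Hk [HA [HB HC]]]].
  apply NNPP; intro Hn.
  assert (Hp : forall t, 0 < t -> f (-t, 0) = f (0,0)).
  { intros t Ht. apply (same_u f d); auto.
    pose proof (mono f d (-t) 0 Hd Hc ltac:(lra)).
    destruct (Rle_lt_dec (uu f 0) (uu f (-t))). lra. exfalso; apply Hn; exists t; auto. }
  apply (allreal_const f M k HG Hnc). intro x.
  destruct (Rtotal_order x 0) as [H|[H|H]]; [| subst; reflexivity |].
  - replace x with (- - x) by ring. apply Hp; lra.
  - pose proof (HA 0 x H) as A.
    replace (0 - x * M) with (- (x * M)) in A by ring.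
    rewrite (Hp (x * M)) in A by nra. rewrite Cmod_self in A.
    replace (0 + x) with x in A by ring.
    apply Cmod_zero. pose proof (Cmod_ge0 (Csub (f (x, 0)) (f (0, 0)))). nra.
Qed.

Lemma unb_up f d M k : 0 < d -> cone f d -> geomP f M k -> nonconstant f ->
  forall K, exists x, K <= uu f x.
Proof.
  intros Hd Hc HG Hnc K. pose proof HG as [HM [Hk [HA [HB HC]]]].
  destruct (pos1 f d M k Hd Hc HG Hnc) as [t1 [Ht1 HD]].
  set (D := uu f t1 - uu f 0). set (c := d * k).
  assert (Hcp : 0 < c) by (unfold c; nra).
  assert (grow : forall t, 0 < t -> uu f (t + t * M) - uu f t >= c * (uu f t - uu f 0)).
  { intros t Ht. pose proof (HB t t Ht) as B. replace (t - t) with 0 in B by ring.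
    pose proof (R1m f d t (t + t * M) Hc ltac:(nra)) as R.
    pose proof (ufst f 0 t) as U. rewrite Rabs_minus_sym in U. pose proof (Rle_abs (uu f t - uu f 0)).
    set (X := Cmod (Csub (f (t + t * M, 0)) (f (t, 0)))) in *.
    set (Y := Cmod (Csub (f (0, 0)) (f (t, 0)))) in *.
    assert (k * Y >= k * (uu f t - uu f 0)) by (apply Rle_ge, Rmult_le_compat_l; lra).
    assert (d * X >= d * (k * (uu f t - uu f 0))) by (apply Rle_ge, Rmult_le_compat_l; lra).
    unfold c. lra. }
  assert (Hind : forall m : nat, exists t, 0 < t /\ uu f t - uu f 0 >= D + INR m * c * D).
  { induction m.
    - exists t1. simpl. split; [lra|]. unfold D; lra.
    - destruct IHm as [t [Ht Hu]]. exists (t + t * M). split; [nra|].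
      pose proof (grow t Ht). rewrite S_INR.
      assert (0 <= INR m * c * D) by (apply Rmult_le_pos; [apply Rmult_le_pos; [apply pos_INR|lra]|unfold D; lra]).
      assert (uu f t - uu f 0 >= D) by lra.
      assert (c * (uu f t - uu f 0) >= c * D) by (apply Rle_ge; apply Rmult_le_compat_l; lra).
      lra. }
  assert (HcD : 0 < c * D) by (unfold D; nra).
  destruct (INR_unbounded ((K - uu f 0) / (c * D))) as [m Hm].
  destruct (Hind m) as [t [Ht Hu]]. exists t.
  assert (INR m * (c * D) > K - uu f 0).
  { apply (Rmult_gt_compat_r (c * D)) in Hm; [|lra].
    replace ((K - uu f 0) / (c * D) * (c * D)) with (K - uu f 0) in Hm by (field; repeat split; unfold D in *; lra). lra. }
  unfold D in *; nra.
Qed.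

Lemma unb_down f d M k : 0 < d -> cone f d -> geomP f M k -> nonconstant f ->
  forall K, exists x, uu f x <= K.
Proof.
  intros Hd Hc HG Hnc K. pose proof HG as [HM [Hk [HA [HB HC]]]].
  destruct (neg1 f d M k Hd Hc HG Hnc) as [t1 [Ht1 HD]].
  set (D := uu f 0 - uu f (-t1)). set (c := d * k).
  assert (Hcp : 0 < c) by (unfold c; nra).
  assert (grow : forall t, 0 < t -> uu f (-t) - uu f (- t - t * M) >= c * (uu f 0 - uu f (-t))).
  { intros t Ht. pose proof (HA (-t) t Ht) as B. replace (- t + t) with 0 in B by ring.
    pose proof (R1m f d (- t - t * M) (-t) Hc ltac:(nra)) as R. rewrite Cmod_sym in R.
    pose proof (ufst f 0 (-t)) as U. pose proof (Rle_abs (uu f 0 - uu f (-t))).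
    set (X := Cmod (Csub (f (- t - t * M, 0)) (f (- t, 0)))) in *.
    set (Y := Cmod (Csub (f (0, 0)) (f (- t, 0)))) in *.
    assert (k * Y >= k * (uu f 0 - uu f (-t))) by (apply Rle_ge, Rmult_le_compat_l; lra).
    assert (d * X >= d * (k * (uu f 0 - uu f (-t)))) by (apply Rle_ge, Rmult_le_compat_l; lra).
    unfold c. lra. }
  assert (Hind : forall m : nat, exists t, 0 < t /\ uu f 0 - uu f (-t) >= D + INR m * c * D).
  { induction m.
    - exists t1. simpl. split; [lra|]. unfold D; lra.
    - destruct IHm as [t [Ht Hu]]. exists (t + t * M). split; [nra|].
      pose proof (grow t Ht). rewrite S_INR.
      replace (- (t + t * M)) with (- t - t * M) by ring.
      assert (0 <= INR m * c * D) by (apply Rmult_le_pos; [apply Rmult_le_pos; [apply pos_INR|lra]|unfold D; lra]).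
      assert (uu f 0 - uu f (-t) >= D) by lra.
      assert (c * (uu f 0 - uu f (-t)) >= c * D) by (apply Rle_ge; apply Rmult_le_compat_l; lra).
      lra. }
  assert (HcD : 0 < c * D) by (unfold D; nra).
  destruct (INR_unbounded ((uu f 0 - K) / (c * D))) as [m Hm].
  destruct (Hind m) as [t [Ht Hu]]. exists (-t).
  assert (INR m * (c * D) > uu f 0 - K).
  { apply (Rmult_gt_compat_r (c * D)) in Hm; [|lra].
    replace ((uu f 0 - K) / (c * D) * (c * D)) with (uu f 0 - K) in Hm by (field; repeat split; unfold D in *; lra). lra. }
  unfold D in *; nra.
Qed.

Lemma cont f d M k : 0 < d -> cone f d -> geomP f M k ->
  forall x0 J, 0 < J -> exists e, 0 < e /\ uu f (x0 + e) - uu f (x0 - e) < J.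
Proof.
  intros Hd Hc HG x0 J HJ. pose proof HG as [HM [Hk [HA [HB HC]]]].
  apply NNPP; intro Hn.
  assert (H : forall e, 0 < e -> uu f (x0 + e) - uu f (x0 - e) >= J).
  { intros e He. destruct (Rlt_le_dec (uu f (x0 + e) - uu f (x0 - e)) J); [|lra].
    exfalso; apply Hn; exists e; auto. }
  set (c := d * k * J).
  assert (Hcp : 0 < c) by (unfold c; apply Rmult_lt_0_compat; nra).
  assert (key : forall e, 0 < e -> uu f (x0 - e) - uu f (x0 - e - (2 * e) * M) >= c).
  { intros e He. pose proof (HA (x0 - e) (2 * e) ltac:(lra)) as A.
    replace (x0 - e + 2 * e) with (x0 + e) in A by ring.
    pose proof (R1m f d (x0 - e - 2 * e * M) (x0 - e) Hc ltac:(nra)) as R. rewrite Cmod_sym in R.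
    pose proof (ufst f (x0 + e) (x0 - e)) as U. pose proof (Rle_abs (uu f (x0 + e) - uu f (x0 - e))).
    pose proof (H e He).
    set (X := Cmod (Csub (f (x0 - e - 2 * e * M, 0)) (f (x0 - e, 0)))) in *.
    set (Y := Cmod (Csub (f (x0 + e, 0)) (f (x0 - e, 0)))) in *.
    assert (k * Y >= k * J) by (apply Rle_ge, Rmult_le_compat_l; lra).
    assert (d * X >= d * (k * J)) by (apply Rle_ge, Rmult_le_compat_l; lra).
    unfold c. lra. }
  set (rho := 1 + 2 * M).
  assert (Hind : forall m : nat, exists e, 0 < e <= 1 /\ uu f (x0 - e) - uu f (x0 - 1) >= INR m * c).
  { induction m.
    - exists 1. simpl. lra.
    - destruct IHm as [e [He Hu]]. exists (e / rho).
      assert (Hr : 1 <= rho) by (unfold rho; lra).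
      split. split. apply Rdiv_lt_0_compat; lra.
      apply (Rmult_le_reg_r rho); [lra|]. replace (e / rho * rho) with e by (field; lra). nra.
      pose proof (key (e / rho) ltac:(apply Rdiv_lt_0_compat; lra)) as K.
      replace (x0 - e / rho - 2 * (e / rho) * M) with (x0 - e) in K by (unfold rho; field; lra).
      rewrite S_INR. lra. }
  destruct (INR_unbounded ((uu f x0 - uu f (x0 - 1)) / c)) as [m Hm].
  destruct (Hind m) as [e [He Hu]].
  pose proof (mono f d (x0 - e) x0 Hd Hc ltac:(lra)).
  apply (Rmult_gt_compat_r c) in Hm; [|lra].
  replace ((uu f x0 - uu f (x0 - 1)) / c * c) with (uu f x0 - uu f (x0 - 1)) in Hm by (field; lra).
  lra.
Qed.

Lemma surj f d M k : 0 < d -> cone f d -> geomP f M k -> nonconstant f ->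
  forall s, exists x, uu f x = s.
Proof.
  intros Hd Hc HG Hnc s.
  set (E := fun x => uu f x <= s).
  destruct (unb_up f d M k Hd Hc HG Hnc (s + 1)) as [x1 Hx1].
  destruct (unb_down f d M k Hd Hc HG Hnc s) as [x2 Hx2].
  assert (Hb : bound E).
  { exists x1. intros x Hx. unfold E in Hx. destruct (Rle_lt_dec x x1); auto.
    pose proof (mono f d x1 x Hd Hc ltac:(lra)). lra. }
  destruct (completeness E Hb (ex_intro _ x2 Hx2)) as [x0 [Hub Hlub]].
  exists x0.
  assert (Hl : forall e, 0 < e -> uu f (x0 - e) <= s).
  { intros e He. apply NNPP; intro N.
    assert (is_upper_bound E (x0 - e)).
    { intros y Hy. unfold E in Hy. destruct (Rle_lt_dec y (x0 - e)); auto.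
      pose proof (mono f d (x0 - e) y Hd Hc ltac:(lra)). lra. }
    pose proof (Hlub _ H). lra. }
  assert (Hr : forall e, 0 < e -> s < uu f (x0 + e)).
  { intros e He. destruct (Rlt_le_dec s (uu f (x0 + e))); auto.
    pose proof (Hub (x0 + e) r). lra. }
  assert (Hm : forall e, 0 < e -> uu f (x0 - e) <= uu f x0 <= uu f (x0 + e)).
  { intros e He. split; apply (mono f d); auto; lra. }
  destruct (Rtotal_order (uu f x0) s) as [H|[H|H]]; auto; exfalso.
  - destruct (cont f d M k Hd Hc HG x0 (s - uu f x0) ltac:(lra)) as [e [He He2]].
    pose proof (Hr e He). pose proof (Hm e He). lra.
  - destruct (cont f d M k Hd Hc HG x0 (uu f x0 - s) ltac:(lra)) as [e [He He2]].
    pose proof (Hl e He). pose proof (Hm e He). lra.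
Qed.

Lemma dm_to_cone f delta : 0 < delta ->
  (forall z zeta : Cplx, z <> zeta ->
      Re (Cdiv (Csub (f z) (f zeta)) (Csub z zeta))
        >= delta * (Cmod (Csub (f z) (f zeta)) / Cmod (Csub z zeta))) ->
  cone f (Rmin delta 1).
Proof.
  intros Hd H. apply dm_cone. intros z w Hzw. specialize (H z w Hzw).
  assert (0 <= Cmod (Csub (f z) (f w)) / Cmod (Csub z w)).
  { pose proof (sub_pt _ _ Hzw). pose proof (Cmod_sq (Csub z w)). pose proof (Cmod_ge0 (Csub z w)).
    unfold Rdiv. apply Rmult_le_pos. apply Cmod_ge0. left. apply Rinv_0_lt_compat. nra. }
  pose proof (Rmin_l delta 1). nra.
Qed.

Theorem proposition1p5 (Gamma : Cplx -> Prop) :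
  (exists f : Cplx -> Cplx, nonconstant f /\ delta_monotone f /\
     (forall w : Cplx, Gamma w <-> exists x : R, w = f (RtoC x)))
  <->
  (exists g : R -> R, lipschitz g /\
     (forall w : Cplx, Gamma w <-> exists x : R, w = (x, g x))).
Proof.
  split.
  - intros [f [Hnc [[delta [Hdp Hdm]] HG]]].
    set (d := Rmin delta 1).
    assert (Hd : 0 < d <= 1) by (unfold d; split; [apply Rmin_glb_lt; lra | apply Rmin_r]).
    assert (Hc : cone f d) by (apply dm_to_cone; auto).
    destruct (geom f d Hd Hc) as [M [k HGe]].
    assert (Hs := surj f d M k ltac:(lra) Hc HGe Hnc).
    set (xs := fun s => proj1_sig (constructive_indefinite_description _ (Hs s))).
    assert (Hxs : forall s, uu f (xs s) = s) by (intro s; unfold xs; destruct constructive_indefinite_description; auto).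
    exists (fun s => snd (f (RtoC (xs s)))). split.
    + exists (1 / d). intros s t. unfold RtoC.
      pose proof (Cmod_snd (Csub (f (xs s, 0)) (f (xs t, 0)))) as C1.
      pose proof (Rdiff f d (xs s) (xs t) ltac:(lra) Hc) as C2.
      rewrite !Hxs in C2. unfold Csub in C1; cbn [fst snd] in C1.
      set (X := Cmod (Csub (f (xs s, 0)) (f (xs t, 0)))) in *.
      apply (Rmult_le_reg_l d); [lra|].
      replace (d * (1 / d * Rabs (s - t))) with (Rabs (s - t)) by (field; lra).
      unfold X in *. unfold Csub in C2. cbn [fst snd] in C2. nra.
    + intro w. rewrite HG. split.
      * intros [x Hx]. exists (uu f x). subst w. unfold RtoC.
        assert (E : f (xs (uu f x), 0) = f (x, 0)) by (apply (same_u f d); [lra|auto|apply Hxs]).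
        rewrite E. unfold uu. apply surjective_pairing.
      * intros [s Hw]. exists (xs s). subst w. unfold RtoC.
        rewrite <- (Hxs s) at 1. unfold uu. symmetry. apply surjective_pairing.
  - intros [g [[L HL] HG]].
    set (Lp := Rabs L).
    assert (HLp : forall x y, Rabs (g x - g y) <= Lp * Rabs (x - y)).
    { intros x y. eapply Rle_trans; [apply HL|]. apply Rmult_le_compat_r; [apply Rabs_pos| apply RRle_abs]. }
    assert (HLp0 : 0 <= Lp) by apply Rabs_pos.
    set (Mc := Lp * Lp + 1).
    set (C := 1 + 2 * Lp * Lp + 2 * Mc * Mc).
    assert (HC : 1 <= C) by (unfold C; nra).
    exists (fun z => (fst z, g (fst z) + Mc * snd z)). split; [|split].
    + exists (0, 0), (1, 0). intro E. inversion E. lra.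
    + exists (1 / (2 * C)). split; [apply Rdiv_lt_0_compat; lra|].
      intros z w Hzw.
      pose proof (sub_pt _ _ Hzw) as Hn.
      pose proof (Cmod_sq (Csub z w)) as Hs. pose proof (Cmod_ge0 (Csub z w)).
      assert (Hsp : 0 < Cmod (Csub z w)) by nra.
      set (s := Cmod (Csub z w)) in *.
      unfold Re, Cdiv, Cmul, Cinv. cbn [fst snd]. rewrite <- Hs.
      unfold Csub in *; cbn [fst snd] in *.
      set (a := fst z - fst w) in *. set (b := snd z - snd w) in *.
      set (G := g (fst z) - g (fst w)).
      assert (HG1 : Rabs G <= Lp * Rabs a) by apply HLp.
      replace (g (fst z) + Mc * snd z - (g (fst w) + Mc * snd w)) with (G + Mc * b) by (unfold G, b; ring).
      assert (HGb : - (a * a + Lp * Lp * (b * b)) / 2 <= G * b).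
      { assert (Rabs (G * b) <= Lp * Rabs a * Rabs b) by (rewrite Rabs_mult; apply Rmult_le_compat_r; [apply Rabs_pos|auto]).
        assert (Ra : Rabs a * Rabs a = a * a) by (rewrite <- Rabs_mult; apply Rabs_pos_eq; nra).
        assert (Rb : Rabs b * Rabs b = b * b) by (rewrite <- Rabs_mult; apply Rabs_pos_eq; nra).
        assert (0 <= (Rabs a - Lp * Rabs b) * (Rabs a - Lp * Rabs b)) by (apply Rle_0_sqr).
        pose proof (Rabs_pos a). pose proof (Rabs_pos b).
        pose proof (Rle_abs (- (G * b))) as HH. rewrite Rabs_Ropp in HH. nra. }
      assert (HGa : G * G <= Lp * Lp * (a * a)).
      { assert (Ra : Rabs a * Rabs a = a * a) by (rewrite <- Rabs_mult; apply Rabs_pos_eq; nra).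
        assert (RG : Rabs G * Rabs G = G * G) by (rewrite <- Rabs_mult; apply Rabs_pos_eq; nra).
        pose proof (Rabs_pos G). nra. }
      assert (Hmod : Cmod (a, G + Mc * b) <= C * s).
      { apply Cmod_le_sq. nra. cbn [fst snd].
        assert (0 <= (G - Mc * b) * (G - Mc * b)) by apply Rle_0_sqr.
        assert ((G + Mc * b) ^ 2 <= 2 * (G * G) + 2 * (Mc * Mc) * (b * b)) by (simpl; lra).
        assert (Hab : 0 <= a ^ 2 + b ^ 2) by lra.
        assert (a ^ 2 + (G + Mc * b) ^ 2 <= C * (a ^ 2 + b ^ 2)).
        { assert (0 <= a * a) by apply Rle_0_sqr. assert (0 <= b * b) by apply Rle_0_sqr.
          assert (0 <= Lp * Lp) by apply Rle_0_sqr.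
          assert (Lp * Lp * (a * a) <= C * (a*a) / 2) by (unfold C; nra).
          unfold C in *. simpl in *. nra. }
        assert (C * (a ^ 2 + b ^ 2) <= C * C * (a ^ 2 + b ^ 2)) by nra.
        rewrite <- Hs in *. nra. }
      assert (E1 : a * (a / (s * s)) - (G + Mc * b) * (- b / (s * s)) = (a * a + G * b + Mc * (b * b)) / (s * s)) by (field; lra).
      rewrite E1.
      assert (HN : (a * a + G * b + Mc * (b * b)) >= (s * s) / 2).
      { rewrite Hs. unfold Mc. nra. }
      assert (L1 : (a * a + G * b + Mc * (b * b)) / (s * s) >= 1 / 2).
      { apply Rle_ge. apply (Rmult_le_reg_r (s * s)); [nra|].
        replace ((a * a + G * b + Mc * (b * b)) / (s * s) * (s * s)) with (a * a + G * b + Mc * (b * b)) by (field; lra).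
        lra. }
      assert (L2 : 1 / (2 * C) * (Cmod (a, G + Mc * b) / s) <= 1 / 2).
      { apply (Rmult_le_reg_r (2 * C * s)); [nra|].
        replace (1 / (2 * C) * (Cmod (a, G + Mc * b) / s) * (2 * C * s)) with (Cmod (a, G + Mc * b)) by (field; lra).
        nra. }
      lra.
    + intro w. rewrite HG. split; intros [x Hx]; exists x; rewrite Hx; unfold RtoC; cbn [fst snd];
        rewrite Rmult_0_r, Rplus_0_r; reflexivity.
Qed.
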